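(* Let $\rho$ be an $i$-polymatroid on $E$ with $i$-dual $\rho^*$, and assume that for every $e\in E$: (1) $\rho(E-e)=\rho(E)$ (equivalently $\rho^*(e)=i$), and (2) $\rho^*(E-e)=\rho^*(E)$ (equivalently $\rho(e)=i$). Then for each positive integer $k$ the map $\phi:\Delta_\rho^k\to\Delta_{\rho^*}^k$ given by $\phi((M_1,\dots,M_k))=(M'_1,\dots,M'_k)$, where $M'_s=(M_s\backslash L_s)^*\oplus U_{0,L_s}$ and $L_s$ is the set of loops of $M_s$, is a bijection. Consequently $\chi(\rho;x)=\chi(\rho^*;x)$.
   Context: A polymatroid on $E$ is a function $\rho:2^E\to\mathbb{Z}$ that is normalized, non-decreasing and submodular; it is an $i$-polymatroid if $\rho(\{e\})\le i$ for all $e$. Its $i$-dual is $\rho^*(X)=i|X|-\rho(E)+\rho(E-X)$. $\Delta_\rho^k$ is the set of $k$-tuples $(N_1,\dots,N_k)$ of matroids on $E$ with $\rho=r_{N_1}+\cdots+r_{N_k}$. $U_{0,L}$ is the rank-$0$ matroid on $L$. The chromatic polynomial $\chi(\rho;x)$ is the polynomial whose value at each positive integer $k$ is $|\Delta_\rho^k|$. *)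

(* Defs.v *)
From HB Require Import structures.
From mathcomp Require Import all_boot all_order all_algebra.
Set Implicit Arguments. Unset Strict Implicit. Unset Printing Implicit Defensive.
Import Order.TTheory GRing.Theory Num.Theory.

Section Defs.
Variable E : finType.

Local Open Scope ring_scope.

Definition normalized (rho : {set E} -> int) : Prop := rho set0 = 0.
Definition nondecreasing (rho : {set E} -> int) : Prop :=
  forall X Y : {set E}, X \subset Y -> rho X <= rho Y.
Definition submodular (rho : {set E} -> int) : Prop :=
  forall X Y : {set E}, rho (X :|: Y) + rho (X :&: Y) <= rho X + rho Y.
Definition polymatroid (rho : {set E} -> int) : Prop :=
  [/\ normalized rho, nondecreasing rho & submodular rho].
Definition ipolymatroid (i : nat) (rho : {set E} -> int) : Prop :=
  polymatroid rho /\ forall e : E, rho [set e] <= i%:Z.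

Definition idual (i : nat) (rho : {set E} -> int) : {set E} -> int :=
  fun X => (i * #|X|)%N%:Z - rho setT + rho (~: X).

Local Close Scope ring_scope.

Definition is_matroid (I : {set {set E}}) : bool :=
  [&& set0 \in I,
      [forall A in I, forall B : {set E}, (B \subset A) ==> (B \in I)] &
      [forall A in I, forall B in I,
         (#|A| < #|B|) ==> [exists x in B :\: A, (x |: A) \in I]]].

Definition matroid := {I : {set {set E}} | is_matroid I}.

Definition indep (M : matroid) : {set {set E}} := val M.

Definition rk (M : matroid) (X : {set E}) : nat :=
  \max_(A in indep M | A \subset X) #|A|.

Definition loops (M : matroid) : {set E} := [set e | [set e] \notin indep M].

Definition del_indep (I : {set {set E}}) (L : {set E}) : {set {set E}} :=
  [set A in I | A \subset ~: L].

Definition bases (I : {set {set E}}) : {set {set E}} :=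
  [set B in I | [forall A in I, (B \subset A) ==> (A == B)]].

Definition dual_indep (S : {set E}) (I : {set {set E}}) : {set {set E}} :=
  [set A : {set E} | (A \subset S) && [exists B in bases I, [disjoint A & B]]].

(* U_{0,L}: rank-0 matroid on L; its only independent set is the empty set *)
Definition U0_indep (L : {set E}) : {set {set E}} := [set set0].

Definition dsum_indep (I1 I2 : {set {set E}}) : {set {set E}} :=
  [set A1 :|: A2 | A1 in I1, A2 in I2].

(* M' = (M \ L)^* (+) U_{0,L}, L = loops of M.  The result is a matroid,
   so the default value of insubd is never used. *)
Definition phi_comp (M : matroid) : matroid :=
  let L := loops M in
  insubd M (dsum_indep (dual_indep (~: L) (del_indep (indep M) L)) (U0_indep L)).

Local Open Scope ring_scope.
Definition Delta (rho : {set E} -> int) (k : nat) : {set {ffun 'I_k -> matroid}} :=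
  [set t : {ffun 'I_k -> matroid} |
     [forall X : {set E}, rho X == \sum_(s < k) ((rk (t s) X)%:Z)]].

Definition phi (k : nat) (t : {ffun 'I_k -> matroid}) : {ffun 'I_k -> matroid} :=
  [ffun s => phi_comp (t s)].

Definition is_chromatic_poly (rho : {set E} -> int) (p : {poly rat}) : Prop :=
  forall k : nat, (0 < k)%N -> p.[k%:R] = (#|Delta rho k|)%:R.
End Defs.

(* Main.v *)
Require Import Defs.
From mathcomp Require Import all_boot all_order all_algebra zify.
Import Order.TTheory GRing.Theory Num.Theory.
Set Implicit Arguments. Unset Strict Implicit. Unset Printing Implicit Defensive.

Definition rkF (E : finType) (I : {set {set E}}) (X : {set E}) : nat :=
  \max_(A in I | A \subset X) #|A|.

Lemma rkF_ub (E : finType) (I : {set {set E}}) (X A : {set E}) :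
  A \in I -> A \subset X -> #|A| <= rkF I X.
Proof. by move=> AI AX; apply: (leq_bigmax_cond (P := fun A => (A \in I) && (A \subset X))) => //; rewrite AI. Qed.

Lemma rkF_ex (E : finType) (I : {set {set E}}) (X : {set E}) :
  set0 \in I -> exists A, [/\ A \in I, A \subset X & #|A| = rkF I X].
Proof.
move=> I0.
have : 0 < #|[pred A : {set E} | (A \in I) && (A \subset X)]|.
  by apply/card_gt0P; exists set0; rewrite inE I0 sub0set.
move=> /(eq_bigmax_cond (fun A : {set E} => #|A|)) [A]; rewrite inE => /andP[AI AX] e.
by exists A; split => //; rewrite /rkF -e.
Qed.

Lemma is_matroidP (E : finType) (I : {set {set E}}) : is_matroid I ->
  [/\ set0 \in I,
      forall A B : {set E}, A \in I -> B \subset A -> B \in I &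
      forall A B : {set E}, A \in I -> B \in I -> #|A| < #|B| ->
        exists2 x, x \in B :\: A & x |: A \in I].
Proof.
case/and3P=> I0 /forallP Hh /forallP Ha; split => //.
  by move=> A B AI BA; move: (Hh A); rewrite AI /= => /forallP /(_ B) /implyP; apply.
move=> A B AI BI lt; move: (Ha A); rewrite AI /= => /forallP /(_ B); rewrite BI /=.
by move=> /implyP /(_ lt) /existsP [x /andP[]]; exists x.
Qed.

Lemma rkF_extend (E : finType) (I : {set {set E}}) (X A : {set E}) : is_matroid I ->
  A \in I -> A \subset X ->
  exists K, [/\ K \in I, A \subset K, K \subset X & #|K| = rkF I X].
Proof.
move=> /is_matroidP [I0 Ih Ia].
move Hn : (rkF I X - #|A|) => n; elim: n A Hn => [|n IH] A Hn AI AX.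
  exists A; split => //; have := rkF_ub AI AX; lia.
have [B [BI BX eB]] := rkF_ex X I0.
have [x xBA xAI] : exists2 x, x \in B :\: A & x |: A \in I by apply: Ia => //; lia.
move: xBA; rewrite inE => /andP[xA xB].
have cx : #|x |: A| = #|A|.+1 by rewrite cardsU1 xA.
have xX : x |: A \subset X by rewrite subUset sub1set (subsetP BX) // AX.
have [K [KI AK KX eK]] := IH (x |: A) ltac:(lia) xAI xX.
exists K; split => //; apply: subset_trans AK; exact: subsetUr.
Qed.

Lemma rkF_mono (E : finType) (I : {set {set E}}) (X Y : {set E}) : set0 \in I ->
  X \subset Y -> rkF I X <= rkF I Y.
Proof.
move=> I0 XY; have [A [AI AX <-]] := rkF_ex X I0.
by apply: rkF_ub => //; apply: subset_trans XY.
Qed.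

Lemma rkF_le_card (E : finType) (I : {set {set E}}) (X : {set E}) : set0 \in I -> rkF I X <= #|X|.
Proof. move=> I0; have [A [AI AX <-]] := rkF_ex X I0; exact: subset_leq_card. Qed.

Lemma rkF_indep (E : finType) (I : {set {set E}}) (A : {set E}) : is_matroid I ->
  (A \in I) = (rkF I A == #|A|).
Proof.
move=> mI; have [I0 Ih Ia] := is_matroidP mI.
apply/idP/eqP.
  move=> AI; have := rkF_ub AI (subxx A); have := rkF_le_card A I0; lia.
move=> e; have [B [BI BA eB]] := rkF_ex A I0.
suff -> : A = B by [].
by apply/eqP; rewrite eq_sym eqEcard BA eB e leqnn.
Qed.
Lemma mI (E : finType) (M : matroid E) : is_matroid (indep M).
Proof. exact: valP M. Qed.

Lemma rkE (E : finType) (M : matroid E) X : rk M X = rkF (indep M) X.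
Proof. by []. Qed.

Lemma indep0 (E : finType) (M : matroid E) : set0 \in indep M.
Proof. by have [] := is_matroidP (mI M). Qed.

Lemma indep_sub (E : finType) (M : matroid E) (A B : {set E}) :
  A \in indep M -> B \subset A -> B \in indep M.
Proof. by have [_ H _] := is_matroidP (mI M); apply: H. Qed.

Lemma rk1 (E : finType) (M : matroid E) (e : E) :
  rk M [set e] = (e \notin loops M).
Proof.
rewrite inE negbK rkE (rkF_indep _ (mI M)) cards1.
have := rkF_le_card [set e] (indep0 M); rewrite cards1.
by case: (rkF _ _) => [|[|]].
Qed.

Lemma indep_noloop (E : finType) (M : matroid E) (A : {set E}) :
  A \in indep M -> A \subset ~: loops M.
Proof.
move=> AI; apply/subsetP => x xA; rewrite !inE negbK.
by apply: indep_sub AI _; rewrite sub1set.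
Qed.

Lemma del_loopsE (E : finType) (M : matroid E) :
  del_indep (indep M) (loops M) = indep M.
Proof.
apply/setP => A; rewrite inE; case AI: (A \in indep M) => //=.
exact: indep_noloop.
Qed.

Lemma basesE (E : finType) (M : matroid E) (B : {set E}) :
  (B \in bases (indep M)) = (B \in indep M) && (#|B| == rk M setT).
Proof.
rewrite inE; case BI: (B \in indep M) => //=.
apply/forallP/eqP.
  move=> H; have [K [KI BK _ eK]] := rkF_extend (mI M) BI (subsetT B).
  by move: (H K); rewrite KI BK /= => /eqP e; rewrite -e.
move=> e A; apply/implyP => AI; apply/implyP => BA.
rewrite eq_sym eqEcard BA /=; rewrite e; exact: rkF_ub AI (subsetT A).
Qed.

Definition Dfam (E : finType) (M : matroid E) :=
  dual_indep (~: loops M) (del_indep (indep M) (loops M)).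

Lemma DfamP (E : finType) (M : matroid E) (A : {set E}) :
  (A \in Dfam M) = (A \subset ~: loops M) && (rk M (~: A) == rk M setT).
Proof.
rewrite /Dfam del_loopsE inE; case: (A \subset ~: loops M) => //=.
apply/existsP/eqP.
  case=> B /andP[]; rewrite basesE => /andP[BI /eqP eB] dAB.
  apply/eqP; rewrite eqn_leq rkF_mono ?indep0 ?subsetT //= -eB.
  by apply: rkF_ub BI _; rewrite subsetC -disjoints_subset.
move=> e; have [B [BI BA eB]] := rkF_ex (~: A) (indep0 M).
have eB' : #|B| = rk M (~: A) := eB.
exists B; rewrite basesE BI /= eB' e eqxx /=.
by rewrite disjoint_sym disjoints_subset.
Qed.

Lemma Dfam_matroid (E : finType) (M : matroid E) : is_matroid (Dfam M).
Proof.
set r := rk M setT.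
have mono (X Y : {set E}) : X \subset Y -> rk M X <= rk M Y.
  by move=> XY; apply: rkF_mono (indep0 M) XY.
apply/and3P; split.
- by rewrite DfamP sub0set setC0 eqxx.
- apply/forallP => A; apply/implyP; rewrite DfamP => /andP[AL /eqP eA].
  apply/forallP => B; apply/implyP => BA; rewrite DfamP.
  rewrite (subset_trans BA AL) /= eqn_leq mono ?subsetT //= -eA mono //.
  by rewrite setCS.
apply/forallP => A; apply/implyP => AD; apply/forallP => A'; apply/implyP => A'D.
apply/implyP => lt.
case: (boolP [exists x in A' :\: A, x |: A \in Dfam M]) => // Hno; exfalso.
have H (x : E) : x \in A' :\: A -> x |: A \notin Dfam M.
  by move=> xS; apply/negP => xD; apply: (negP Hno); apply/existsP; exists x; rewrite xS.
move: AD A'D; rewrite !DfamP => /andP[AL /eqP eA] /andP[A'L /eqP eA'].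
set S := A' :\: A.
have SK (K : {set E}) : K \in indep M -> K \subset ~: A -> #|K| = r -> S \subset K.
  move=> KI KA eK; apply/subsetP => x xS; apply/negPn/negP => xK.
  apply: (negP (H x xS)); rewrite DfamP.
  have xA' : x \in A' by move: xS; rewrite inE => /andP[].
  rewrite subUset sub1set (subsetP A'L x xA') AL /= eqn_leq mono ?subsetT //= -/r -eK.
  apply: rkF_ub KI _; apply/subsetP => y yK; rewrite !inE negb_or.
  apply/andP; split; first by apply/eqP => yx; move: yK; rewrite yx (negbTE xK).
  by have := subsetP KA y yK; rewrite inE.
have [K' [K'I K'A' eK']] := rkF_ex (~: A') (indep0 M).
set K'' := K' :\: A.
have K''I : K'' \in indep M by apply: indep_sub K'I _; exact: subsetDl.
have K''A : K'' \subset ~: A by rewrite /K'' setDE subsetIr.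
have [K [KI K''K KA eK]] := rkF_extend (mI M) K''I K''A.
have eKr : #|K| = r by rewrite eK -rkE eA.
have SsK := SK K KI KA eKr.
have dis : S :&: K'' = set0.
  apply/setP => x; rewrite !inE; apply/negbTE; apply/negP => /and3P[/andP[_ xA'] _ xK'].
  by have := subsetP K'A' x xK'; rewrite inE xA'.
have cU : #|S :|: K''| <= r by rewrite -eKr; apply: subset_leq_card; rewrite subUset SsK K''K.
move: cU; rewrite cardsU dis cards0 subn0 => cU.
have c1 := cardsID A K'.
have c2 : #|K' :&: A| <= #|A :\: A'|.
  apply: subset_leq_card; apply/subsetP => x; rewrite !inE => /andP[xK' xA]; rewrite xA andbT.
  by have := subsetP K'A' x xK'; rewrite inE.
have c3 := cardsID A' A.
have c4 := cardsID A A'.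
have c5 : #|A :&: A'| = #|A' :&: A| by rewrite setIC.
have eK'r : #|K'| = r by rewrite eK' -rkE eA'.
rewrite -/S -/K'' in c3 c1 cU. move: lt; rewrite /S /K'' in c1 c2 c3 c4 c5 cU * => lt. lia.
Qed.

Lemma dsum_U0 (E : finType) (D : {set {set E}}) (L : {set E}) :
  dsum_indep D (U0_indep L) = D.
Proof.
apply/setP => A; apply/imset2P/idP.
  by case=> A1 A1D A2; rewrite inE => /eqP -> ->; rewrite setU0.
by move=> AD; exists A set0; rewrite ?inE ?setU0.
Qed.

Lemma phi_compE (E : finType) (M : matroid E) : indep (phi_comp M) = Dfam M.
Proof.
rewrite /phi_comp /indep insubdK -/(Dfam M) ?dsum_U0 //.
exact: Dfam_matroid.
Qed.

Lemma rk_phi (E : finType) (M : matroid E) (X : {set E}) :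
  rk (phi_comp M) X + rk M setT = #|X :\: loops M| + rk M (~: X).
Proof.
set L := loops M; set r := rk M setT.
have D0 : set0 \in Dfam M by have [] := is_matroidP (Dfam_matroid M).
rewrite rkE phi_compE.
apply/eqP; rewrite eqn_leq; apply/andP; split.
  have [A [AD AX <-]] := rkF_ex X D0.
  move: AD; rewrite DfamP => /andP[AL /eqP eA].
  have [B [BI BA eB]] := rkF_ex (~: A) (indep0 M).
  have eBr : #|B| = r by rewrite eB -rkE eA.
  have c1 := cardsID X B.
  have c2 : #|B :\: X| <= rk M (~: X).
    apply: rkF_ub; first by apply: indep_sub BI (subsetDl _ _).
    by rewrite setDE subsetIr.
  have dis : (B :&: X) :&: A = set0.
    apply/setP => x; rewrite !inE; apply/negbTE; apply/negP => /andP[/andP[xB _] xA].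
    by have := subsetP BA x xB; rewrite inE xA.
  have c3 : #|(B :&: X) :|: A| <= #|X :\: L|.
    apply: subset_leq_card; rewrite subUset; apply/andP; split.
      apply/subsetP => x; rewrite inE => /andP[xB xX]; rewrite inE xX andbT.
      by have := subsetP (indep_noloop BI) x xB; rewrite in_setC.
    apply/subsetP => x xA; rewrite inE (subsetP AX x xA) andbT.
    by have := subsetP AL x xA; rewrite in_setC.
  move: c3; rewrite cardsU dis cards0 subn0 => c3.
  lia.
have [J [JI JX eJ]] := rkF_ex (~: X) (indep0 M).
have [K [KI JK _ eK]] := rkF_extend (mI M) JI (subsetT J).
have eKr : #|K| = r by rewrite eK.
set A := (X :\: L) :\: K.
have AD : A \in Dfam M.
  rewrite DfamP; apply/andP; split.
    by apply/subsetP => x; rewrite !inE => /andP[_ /andP[]].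
  rewrite eqn_leq rkF_mono ?indep0 ?subsetT //= -/r -eKr.
  apply: rkF_ub KI _; apply/subsetP => x xK; by rewrite !inE xK.
have AX : A \subset X by apply/subsetP => x; rewrite !inE => /and3P[].
have c1 := rkF_ub AD AX.
have c2 := cardsID K (X :\: L).
have e3 : (X :\: L) :&: K = K :&: X.
  apply/setP => x; rewrite !in_setI in_setD /L; case xK: (x \in K); rewrite ?andbF //= !andbT.
  by have := subsetP (indep_noloop KI) x xK; rewrite in_setC => ->.
have c4 := cardsID X K.
have c5 : #|K :\: X| = rk M (~: X).
  apply/eqP; rewrite eqn_leq; apply/andP; split.
    apply: rkF_ub; first by apply: indep_sub KI (subsetDl _ _).
    by rewrite setDE subsetIr.
  rewrite rkE -eJ; apply: subset_leq_card.
  by apply/subsetP => x xJ; rewrite inE (subsetP JK x xJ) andbT; have := subsetP JX x xJ; rewrite inE.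
rewrite e3 -/A in c2.
lia.
Qed.

Definition nocl (E : finType) (M : matroid E) := forall e : E, rk M (setT :\ e) = rk M setT.

Lemma rk0 (E : finType) (M : matroid E) : rk M set0 = 0.
Proof. by apply/eqP; rewrite -leqn0 -(cards0 E) rkF_le_card ?indep0. Qed.

Lemma matroid_eq (E : finType) (M1 M2 : matroid E) :
  (forall X, rk M1 X = rk M2 X) -> M1 = M2.
Proof.
move=> H; apply: val_inj; apply/setP => A.
by rewrite -/(indep M1) -/(indep M2) !(rkF_indep _ (mI _)) -!rkE H.
Qed.

Lemma card1D (E : finType) (e : E) (L : {set E}) : #|[set e] :\: L| = (e \notin L).
Proof.
case eL: (e \in L) => /=.
  suff -> : [set e] :\: L = set0 by rewrite cards0.
  by apply/setP => x; rewrite !inE; have [->|/negbTE xe] := eqVneq x e; rewrite ?eL ?xe ?eqxx ?andbF.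
suff -> : [set e] :\: L = [set e] by rewrite cards1.
by apply/setP => x; rewrite !inE; have [->|/negbTE xe] := eqVneq x e; rewrite ?eL ?xe ?eqxx ?andbF.
Qed.

Lemma setC1E (E : finType) (e : E) : ~: [set e] = setT :\ e.
Proof. by rewrite setTD. Qed.

Lemma loops_phi (E : finType) (M : matroid E) : nocl M ->
  loops (phi_comp M) = loops M.
Proof.
move=> ncl; apply/setP => e.
have h := rk_phi M [set e]; rewrite setC1E (ncl e) rk1 card1D in h.
have {}h : (e \notin loops (phi_comp M)) = (e \notin loops M) :> nat by lia.
by move: h; case: (e \in loops (phi_comp M)); case: (e \in loops M).
Qed.

Lemma phi_invol (E : finType) (M : matroid E) : nocl M ->
  phi_comp (phi_comp M) = M.
Proof.
move=> ncl; apply: matroid_eq => X.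
have h1 := rk_phi (phi_comp M) X.
have h2 := rk_phi M setT.
have h3 := rk_phi M (~: X).
rewrite loops_phi // in h1.
rewrite setTD setCT rk0 in h2.
rewrite setCK in h3.
have c := cardsID X (~: loops M).
have e1 : ~: loops M :&: X = X :\: loops M by rewrite setDE setIC.
have e2 : ~: loops M :\: X = ~: X :\: loops M by rewrite !setDE setIC.
rewrite e1 e2 in c.
lia.
Qed.

Lemma sumz (k : nat) (F : 'I_k -> nat) :
  (\sum_(s < k) Posz (F s))%R = Posz (\sum_(s < k) F s).
Proof.
apply: (big_ind2 (fun (a : int) (b : nat) => a = Posz b)) => //.
by move=> x1 x2 y1 y2 -> ->; rewrite PoszD.
Qed.

Lemma DeltaP (E : finType) (f : {set E} -> int) (k : nat) (t : {ffun 'I_k -> matroid E}) :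
  t \in Delta f k <-> forall X, f X = Posz (\sum_(s < k) rk (t s) X).
Proof.
rewrite inE; split.
  by move=> /forallP H X; move/eqP: (H X) ->; rewrite sumz.
by move=> H; apply/forallP => X; rewrite H sumz.
Qed.

Lemma card_loops (E : finType) (X L : {set E}) :
  #|X :\: L| = \sum_(e in X) (e \notin L : nat).
Proof.
rewrite -sum1_card [LHS]big_mkcond [RHS]big_mkcond /=; apply: eq_bigr => e _.
by rewrite !inE; case: (e \in X); case: (e \in L).
Qed.

Lemma phi_Delta (E : finType) (i : nat) (sigma : {set E} -> int) (k : nat)
  (t : {ffun 'I_k -> matroid E}) :
  (forall e, sigma (setT :\ e) = sigma setT) ->
  (forall e, sigma [set e] = Posz i) ->
  t \in Delta sigma k ->
  (forall s, nocl (t s)) /\ phi t \in Delta (idual i sigma) k.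
Proof.
move=> H1 H2 /DeltaP tD.
have ncl : forall s, nocl (t s).
  move=> s e; apply/eqP; rewrite eqn_leq rkF_mono ?indep0 ?subsetT //=.
  have le : forall s, rk (t s) (setT :\ e) <= rk (t s) setT.
    by move=> s'; apply: rkF_mono; rewrite ?indep0 ?subsetT.
  have h := H1 e; rewrite !tD in h.
  case: h => h.
  have : \sum_(s < k) (rk (t s) setT - rk (t s) (setT :\ e)) == 0.
    by rewrite sumnB // h subnn.
  rewrite sum_nat_eq0 => /forallP /(_ s) /implyP /(_ isT).
  by rewrite subn_eq0.
split => //; apply/DeltaP => X.
have lp : \sum_(s < k) #|X :\: loops (t s)| = i * #|X|.
  under eq_bigr => s _ do rewrite card_loops.
  rewrite exchange_big /= mulnC -sum_nat_const; apply: eq_bigr => e _.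
  have := H2 e; rewrite tD => -[<-].
  by apply: eq_bigr => s _; rewrite rk1.
have rs : \sum_(s < k) rk (phi t s) X + \sum_(s < k) rk (t s) setT =
          \sum_(s < k) #|X :\: loops (t s)| + \sum_(s < k) rk (t s) (~: X).
  rewrite -!big_split /=; apply: eq_bigr => s _; rewrite ffunE; exact: rk_phi.
rewrite /idual !tD.
lia.
Qed.

Lemma Delta_ext (E : finType) (f g : {set E} -> int) k :
  (forall X, f X = g X) -> Delta f k = Delta g k.
Proof. by move=> fg; apply/setP => t; rewrite !inE; apply: eq_forallb => X; rewrite fg. Qed.

Local Open Scope ring_scope.

Lemma poly_eq_nat (p q : {poly rat}) :
  (forall k : nat, (0 < k)%N -> p.[k%:R] = q.[k%:R]) -> p = q.
Proof.
move=> H; apply/eqP; rewrite -subr_eq0; apply/negPn/negP => nz.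
set rs := [seq (j.+1)%:R : rat | j <- iota 0 (size (p - q))].
have : all (root (p - q)) rs.
  apply/allP => x /mapP [j _ ->]; rewrite /root hornerD hornerN H // subrr.
  by [].
move=> /(max_poly_roots nz) /(_ _) h.
have u : uniq rs.
  rewrite map_inj_uniq ?iota_uniq // => a b /eqP; rewrite eqr_nat => /eqP [].
  by [].
by have := h u; rewrite size_map size_iota ltnn.
Qed.


Theorem corollary4p3 (E : finType) (i : nat) (rho : {set E} -> int) :
  ipolymatroid i rho ->
  (forall e : E, rho (setT :\ e) = rho setT) ->
  (forall e : E, idual i rho (setT :\ e) = idual i rho setT) ->
  (forall k : nat, (0 < k)%N ->
     {in Delta rho k, forall t, phi t \in Delta (idual i rho) k} /\
     {in Delta rho k &, injective (@phi E k)} /\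
     {subset Delta (idual i rho) k <= [set phi t | t in Delta rho k]}) /\
  (forall p q : {poly rat},
     is_chromatic_poly rho p -> is_chromatic_poly (idual i rho) q -> p = q).
Proof.
move=> [[r0 _ _] _] h2 h3.
have H2 : forall e, rho [set e] = Posz i.
  move=> e; have ee : ~: ([set: E] :\ e) = [set e].
    by apply/setP => x; rewrite !inE; case: (x == e).
  have := h3 e; rewrite /idual ee setCT r0.
  have c : (i * #|[set: E]| = i + i * #|[set: E] :\ e|)%N.
    by rewrite (cardsD1 e [set: E]) in_setT mulnDr muln1.
  rewrite c; lia.
have H1' : forall e, idual i rho (setT :\ e) = idual i rho setT by [].
have H2' : forall e, idual i rho [set e] = Posz i.
  move=> e; rewrite /idual setC1E h2 cards1 muln1; lia.
have dd : forall X, idual i (idual i rho) X = rho X.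
  move=> X; rewrite /idual setCK setCT r0.
  have c : (i * #|[set: E]| = i * #|X| + i * #|~: X|)%N.
    by rewrite -mulnDr cardsC cardsT.
  rewrite c; lia.
have part1 : forall k, {in Delta rho k, forall t, phi t \in Delta (idual i rho) k}.
  by move=> k t tD; have [] := phi_Delta h2 H2 tD.
have part2 : forall k, {in Delta rho k &, injective (@phi E k)}.
  move=> k t1 t2 t1D t2D e.
  have [n1 _] := phi_Delta h2 H2 t1D; have [n2 _] := phi_Delta h2 H2 t2D.
  apply/ffunP => s; have := congr1 (fun t : {ffun 'I_k -> matroid E} => t s) e; rewrite /= !ffunE => e'.
  by rewrite -(phi_invol (n1 s)) -(phi_invol (n2 s)) e'.
have part3 : forall k, {subset Delta (idual i rho) k <= [set phi t | t in Delta rho k]}.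
  move=> k t' t'D; have [n' D'] := phi_Delta H1' H2' t'D.
  rewrite (Delta_ext _ dd) in D'.
  apply/imsetP; exists (phi t') => //; apply/ffunP => s; rewrite !ffunE.
  by rewrite phi_invol.
split; first by move=> k _; split; [exact: part1 | split; [exact: part2 | exact: part3]].
move=> p q Hp Hq; apply: poly_eq_nat => k k0.
rewrite Hp // Hq //; congr (_ %:R).
rewrite -(card_in_imset (part2 k)); apply: eq_card => t.
apply/idP/idP; last exact: part3.
by case/imsetP => t0 t0D ->; apply: part1.
Qed.
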